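(* For any two points $x,y\in\mathbb{R}^n$, the pair $(\{x\},\{y\})$ is an $\mathcal{S}_n$-cute pair, and the pair $(x+B_2^n,\,y+B_2^n)$ is an $\mathcal{S}_n$-cute pair.
   Context: Convex bodies are compact convex non-empty subsets of $\mathbb{R}^n$; $B_2^n$ is the closed Euclidean unit ball; $\delta$ is the Hausdorff distance $\delta(K_0,K_1)=\inf\{\lambda>0: K_0\subseteq K_1+\lambda B_2^n,\ K_1\subseteq K_0+\lambda B_2^n\}$. $\mathcal{S}_n$ is the set of convex bodies in $\mathbb{R}^n$ which are intersections of Euclidean unit balls. A pair $(K_0,K_1)\in\mathcal{S}_n\times\mathcal{S}_n$ is called $\mathcal{S}_n$-cute if $M=\frac{K_0+K_1}{2}$ is the unique body in $\mathcal{S}_n$ satisfying $\delta(K_0,M)=\frac12\delta(K_0,K_1)$ and $\delta(K_1,M)=\frac12\delta(K_0,K_1)$. *)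

(* Defs.v *)
From HB Require Import structures.
From mathcomp Require Import all_boot all_order all_algebra.
From mathcomp Require Import all_classical all_reals all_analysis.
Set Implicit Arguments. Unset Strict Implicit. Unset Printing Implicit Defensive.
Import Order.TTheory GRing.Theory Num.Theory.
Import numFieldNormedType.Exports.
Local Open Scope classical_set_scope.
Local Open Scope ring_scope.

Section Defs.
Variables (R : realType) (n : nat).
Notation vec := 'rV[R]_n.

Definition enorm (x : vec) : R := Num.sqrt (\sum_(i < n) x ord0 i ^+ 2).

Definition unit_ball : set vec := [set x | enorm x <= 1].

Definition msum (A B : set vec) : set vec := [set a + b | a in A & b in B].
Definition mscale (l : R) (A : set vec) : set vec := [set l *: a | a in A].
Definition mtrans (x : vec) (A : set vec) : set vec := [set x + a | a in A].

Definition convex (K : set vec) : Prop :=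
  forall a b (t : R), K a -> K b -> 0 <= t -> t <= 1 -> K ((1 - t) *: a + t *: b).

Definition convex_body (K : set vec) : Prop :=
  compact K /\ convex K /\ K !=set0.

Definition hausdorff (K0 K1 : set vec) : R :=
  inf [set l : R | 0 < l /\ K0 `<=` msum K1 (mscale l unit_ball)
                         /\ K1 `<=` msum K0 (mscale l unit_ball)].

Definition Sn (K : set vec) : Prop :=
  convex_body K /\
  exists C : set vec, K = \bigcap_(c in C) mtrans c unit_ball.

Definition Sn_cute (K0 K1 : set vec) : Prop :=
  Sn K0 /\ Sn K1 /\
  let M := mscale (2^-1) (msum K0 K1) in
  let d := hausdorff K0 K1 in
  [/\ Sn M, hausdorff K0 M = d / 2, hausdorff K1 M = d / 2 &
      forall M', Sn M' -> hausdorff K0 M' = d / 2 -> hausdorff K1 M' = d / 2 ->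
                 M' = M].
End Defs.

(* Main.v *)
Require Import Defs.
From HB Require Import structures.
From mathcomp Require Import all_boot all_order all_algebra.
From mathcomp Require Import all_classical all_reals all_analysis.
From mathcomp Require Import ring lra.
Import Order.TTheory GRing.Theory Num.Theory.
Import numFieldTopology.Exports numFieldNormedType.Exports.
Local Open Scope classical_set_scope.
Local Open Scope ring_scope.

Section Alg.
Variables (R : realType) (n : nat).
Notation vec := 'rV[R]_n.
Notation B := (@unit_ball R n).

Definition dot (a b : vec) : R := \sum_(i < n) a ord0 i * b ord0 i.
Definition nsq (a : vec) : R := dot a a.

Lemma dotC a b : dot a b = dot b a.
Proof. by apply: eq_bigr => i _; rewrite mulrC. Qed.

Lemma dotDl a b c : dot (a + b) c = dot a c + dot b c.
Proof. by rewrite /dot -big_split; apply: eq_bigr => i _; rewrite mxE mulrDl. Qed.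

Lemma dotZl k a b : dot (k *: a) b = k * dot a b.
Proof. by rewrite /dot mulr_sumr; apply: eq_bigr => i _; rewrite mxE mulrA. Qed.

Lemma dotNl a b : dot (- a) b = - dot a b.
Proof. by rewrite -scaleN1r dotZl mulN1r. Qed.

Lemma dotBl a b c : dot (a - b) c = dot a c - dot b c.
Proof. by rewrite dotDl dotNl. Qed.

Lemma dotDr a b c : dot c (a + b) = dot c a + dot c b.
Proof. by rewrite dotC dotDl !(dotC c). Qed.
Lemma dotZr k a b : dot b (k *: a) = k * dot b a.
Proof. by rewrite dotC dotZl dotC. Qed.
Lemma dotBr a b c : dot c (a - b) = dot c a - dot c b.
Proof. by rewrite dotC dotBl !(dotC c). Qed.

Lemma nsq_ge0 a : 0 <= nsq a.
Proof. by apply: sumr_ge0 => i _; rewrite -expr2 sqr_ge0. Qed.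

Lemma nsq_eq0 a : nsq a <= 0 -> a = 0.
Proof.
move=> h; have h0 : nsq a = 0 by apply/eqP; rewrite eq_le h nsq_ge0.
apply/rowP => i; rewrite mxE.
have /psumr_eq0P H := h0.
have := H (fun j _ => ltac:(by rewrite -expr2 sqr_ge0)) i isT.
by move/eqP; rewrite mulf_eq0 orbb => /eqP.
Qed.
Lemma nsqD a b : nsq (a + b) = nsq a + 2 * dot a b + nsq b.
Proof. rewrite /nsq dotDl !dotDr (dotC b a); ring. Qed.
Lemma nsqB a b : nsq (a - b) = nsq a - 2 * dot a b + nsq b.
Proof. rewrite /nsq dotBl !dotBr (dotC b a); ring. Qed.
Lemma nsqZ k a : nsq (k *: a) = k ^+ 2 * nsq a.
Proof. rewrite /nsq dotZl dotZr; ring. Qed.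
Lemma nsq_sym a b : nsq (a - b) = nsq (b - a).
Proof. rewrite !nsqB (dotC a b); ring. Qed.
Lemma dot_le a b : 2 * dot a b <= nsq a + nsq b.
Proof. have := nsq_ge0 (a - b); rewrite nsqB; lra. Qed.
Lemma dot_bound (l : R) w u : 0 < l -> nsq w <= l ^+ 2 -> nsq u <= 1 -> dot w u <= l.
Proof.
move=> l0 hw hu; have := dot_le w (l *: u); rewrite dotZr nsqZ => h.
have hd : l * (2 * dot w u) <= l * (2 * l) by nra.
rewrite ler_pM2l // in hd; lra.
Qed.
Lemma para a b : nsq (a + b) + nsq (a - b) = 2 * nsq a + 2 * nsq b.
Proof. rewrite nsqD nsqB; ring. Qed.

Lemma enormE a : enorm a = Num.sqrt (nsq a). Proof. by []. Qed.

Lemma sqrt_le (s l : R) : 0 <= s -> 0 <= l -> (Num.sqrt s <= l) = (s <= l ^+ 2).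
Proof.
by move=> s0 l0; rewrite -(ler_sqrt _ (sqr_ge0 l)) sqrtr_sqr ger0_norm.
Qed.

Lemma ub_char a : B a <-> nsq a <= 1.
Proof. by rewrite /unit_ball /= enormE sqrt_le ?nsq_ge0 // expr1n. Qed.

Lemma sb_char (l : R) z : 0 < l -> (Defs.mscale l B z <-> nsq z <= l ^+ 2).
Proof.
move=> l0; split.
  by move=> [a /ub_char ha <-]; rewrite nsqZ; nra.
move=> h; exists (l^-1 *: z); last by rewrite scalerA mulfV ?gt_eqF // scale1r.
apply/ub_char; rewrite nsqZ exprVn.
have l2 : 0 < l ^+ 2 by rewrite exprn_gt0.
by rewrite ler_pdivrMl // mulr1.
Qed.

Lemma tb_char c z : mtrans c B z <-> nsq (z - c) <= 1.
Proof.
split; first by move=> [a /ub_char ha <-]; rewrite addrC addKr.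
by move=> h; exists (z - c); [apply/ub_char | rewrite addrC subrK].
Qed.

Lemma inf_char (S : set R) r : 0 <= r -> (forall l, S l <-> 0 < l /\ r <= l) -> inf S = r.
Proof.
move=> r0 HS.
have lbS : lbound S r by move=> l /HS [].
have neS : S !=set0 by exists (r + 1); apply/HS; split; lra.
have h1 : r <= inf S by apply: lb_le_inf.
apply/eqP; rewrite eq_le h1 andbT; rewrite leNgt; apply/negP => hlt.
have St : S ((r + inf S) / 2) by apply/HS; split; lra.
have := ge_inf (ex_intro _ r lbS) St; lra.
Qed.

Lemma le_of_forall (a b : R) : (forall l, a < l -> b <= l) -> b <= a.
Proof.
move=> h; rewrite leNgt; apply/negP => hab.
have := h ((a + b) / 2) ltac:(lra); lra.
Qed.

Definition hS (A K : set vec) := [set l : R | 0 < l /\ A `<=` Defs.msum K (Defs.mscale l B)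
                         /\ K `<=` Defs.msum A (Defs.mscale l B)].
Lemma hausE A K : hausdorff A K = inf (hS A K). Proof. by []. Qed.

Lemma mscale_mono (l l' : R) : 0 < l' -> l' <= l -> Defs.mscale l' B `<=` Defs.mscale l B.
Proof.
move=> l0 ll z /(sb_char _ _ l0) h; apply/sb_char; first lra.
apply: le_trans h _; rewrite ler_pXn2r // ?nnegrE; lra.
Qed.

Lemma msum_mono (A K K' : set vec) : K `<=` K' -> Defs.msum A K `<=` Defs.msum A K'.
Proof. by move=> s z [a Aa [b Kb <-]]; exists a => //; exists b => //; apply: s. Qed.

Lemma msum_monol (A A' K : set vec) : A `<=` A' -> Defs.msum A K `<=` Defs.msum A' K.
Proof. by move=> s z [a Aa [b Kb <-]]; exists a; [apply: s | exists b]. Qed.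

Lemma haus_ext A K r l : hS A K !=set0 -> hausdorff A K = r -> r < l ->
  A `<=` Defs.msum K (Defs.mscale l B) /\ K `<=` Defs.msum A (Defs.mscale l B).
Proof.
move=> ne; rewrite hausE => <- /(inf_lt ne) [l' [l0 [h1 h2]] ll].
split.
  by move=> z /h1; apply: msum_mono; apply: mscale_mono => //; lra.
by move=> z /h2; apply: msum_mono; apply: mscale_mono => //; lra.
Qed.

Lemma vec_id (x y z : vec) : y + (x - z) + (z - y) = x.
Proof. by rewrite addrC addrA subrK addrC subrK. Qed.

Lemma nsq_sqrt a : Num.sqrt (nsq a) ^+ 2 = nsq a.
Proof. by rewrite sqr_sqrtr // nsq_ge0. Qed.

Lemma haus_pts a b : hausdorff [set a] [set b] = Num.sqrt (nsq (a - b)).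
Proof.
apply: inf_char; first exact: sqrtr_ge0.
move=> l; split.
  move=> [l0 [h1 _]]; split => //.
  have [b' -> [w /(sb_char _ _ l0) hw E]] := h1 a erefl.
  rewrite sqrt_le ?nsq_ge0 ?(ltW l0) //.
  by have -> : a - b = w by rewrite -E addrC addKr.
move=> [l0]; rewrite sqrt_le ?nsq_ge0 ?(ltW l0) // => h.
split => //; split => z ->.
  by exists b => //; exists (a - b); [apply/sb_char | rewrite addrC subrK].
by exists a => //; exists (b - a); [apply/sb_char => //; rewrite -nsq_sym | rewrite addrC subrK].
Qed.

Lemma lower a c l : 0 < l -> Defs.mtrans a B `<=` Defs.msum (Defs.mtrans c B) (Defs.mscale l B) ->
  Num.sqrt (nsq (a - c)) <= l.
Proof.
move=> l0 sub; set r := Num.sqrt (nsq (a - c)).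
have r0 : 0 <= r by apply: sqrtr_ge0.
have [->|rn0] := eqVneq r 0; first exact: ltW.
have rp : 0 < r by rewrite lt_neqAle eq_sym rn0.
have r2 : nsq (a - c) = r ^+ 2 by rewrite nsq_sqrt.
set u := r^-1 *: (a - c).
have nu : nsq u = 1 by rewrite nsqZ r2 exprVn mulVf // expf_neq0.
have : Defs.mtrans a B (a + u) by apply/tb_char; rewrite addrC addKr nu.
move=> /sub [p /tb_char hp [w /(sb_char _ _ l0) hw E]].
have E2 : (a - c) + u = (p - c) + w by rewrite addrAC -E addrAC.
have d1 : dot (a - c + u) u = r + 1.
  rewrite dotDl; have -> : dot u u = 1 by exact: nu.
  by rewrite dotZr -/(nsq _) r2; field.
have h1 : dot (p - c) u <= 1 by apply: dot_bound; rewrite ?expr1n ?nu.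
have h2 : dot w u <= l by apply: dot_bound; rewrite ?nu.
have d2 : dot (p - c + w) u <= 1 + l by rewrite dotDl; lra.
rewrite -E2 d1 in d2.
lra.
Qed.

Lemma haus_balls a b : hausdorff (Defs.mtrans a B) (Defs.mtrans b B) = Num.sqrt (nsq (a - b)).
Proof.
apply: inf_char; first exact: sqrtr_ge0.
move=> l; split.
  by move=> [l0 [h1 _]]; split => //; apply: lower.
move=> [l0]; rewrite sqrt_le ?nsq_ge0 ?(ltW l0) // => h.
split => //; split => z /tb_char hz.
  exists (b + (z - a)); first by apply/tb_char; rewrite addrC addKr.
  by exists (a - b); [apply/sb_char | rewrite vec_id].
exists (a + (z - b)); first by apply/tb_char; rewrite addrC addKr.
by exists (b - a); [apply/sb_char => //; rewrite -nsq_sym | rewrite vec_id].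
Qed.

Lemma coord_le_norm (v : vec) i : `|v ord0 i| <= `|v|.
Proof.
have -> : `|v| = mx_norm v by [].
rewrite mx_normrE.
by apply: (le_trans _ (le_bigmax _ _ (ord0, i))) => /=.
Qed.

Lemma sum_cont (r : seq 'I_n) (g : 'I_n -> vec -> R) :
  (forall i, continuous (g i)) -> continuous (fun z => \sum_(i <- r) g i z).
Proof.
move=> hg; elim: r => [|i r IH].
  under eq_fun do rewrite big_nil; exact: cst_continuous.
under eq_fun do rewrite big_cons.
by move=> z; apply: continuousD; [apply: hg | apply: IH].
Qed.

Lemma term_le (v : vec) i : v ord0 i ^+ 2 <= nsq v.
Proof.
rewrite /nsq /dot (bigD1 i) //= -expr2 lerDl.
by apply: sumr_ge0 => j _; rewrite -expr2 sqr_ge0.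
Qed.

Lemma coordB_cont (c : vec) i : continuous (fun z : vec => (z - c) ord0 i).
Proof.
have -> : (fun z : vec => (z - c) ord0 i) = (fun z : vec => z ord0 i - c ord0 i).
  by apply/funext => z; rewrite !mxE.
move=> z; apply: (@continuousB _ _ _ (fun z : vec => z ord0 i) (fun=> c ord0 i)).
  exact: coord_continuous.
exact: cst_continuous.
Qed.

Lemma ball_compact c : compact (Defs.mtrans c B).
Proof.
apply: (@subclosed_compact _ _ [set v : vec | forall i, `[c ord0 i - 1, c ord0 i + 1]%classic (v ord0 i)]).
- have -> : Defs.mtrans c B = (fun z => nsq (z - c)) @^-1` [set t : R | t <= 1].
    by apply/seteqP; split => z /= /tb_char.
  apply: preimage_closed; last exact: closed_le.
  move=> z _; apply: sum_cont => i w.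
  apply: continuousM; apply: coordB_cont.
- have H := (@rV_compact R n (fun i => `[c ord0 i - 1, c ord0 i + 1]%classic) (fun i => @segment_compact R (c ord0 i - 1) (c ord0 i + 1))).
  exact H.
- move=> z /tb_char h i /=; rewrite in_itv /=.
  have := le_trans (term_le (z - c) i) h; rewrite !mxE => h2.
  apply/andP; split; nra.
Qed.

Lemma convex_ball (c : vec) : convex (Defs.mtrans c B).
Proof.
move=> a b t /tb_char ha /tb_char hb t0 t1; apply/tb_char.
have -> : (1 - t) *: a + t *: b - c = (1 - t) *: (a - c) + t *: (b - c).
  by apply/rowP => i; rewrite !mxE; ring.
rewrite nsqD !nsqZ dotZl dotZr.
have hd := dot_le (a - c) (b - c).
have hP := nsq_ge0 (a - c); have hQ := nsq_ge0 (b - c).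
have htt : 0 <= t * (1 - t) by nra.
have h1 : t * (1 - t) * (2 * dot (a - c) (b - c)) <= t * (1 - t) * (nsq (a - c) + nsq (b - c)).
  by apply: ler_wpM2l.
nra.
Qed.

Lemma Sn_ball (c : vec) : Defs.Sn (Defs.mtrans c B).
Proof.
split; first split; [exact: ball_compact | split; [exact: convex_ball|] |].
  by exists c; apply/tb_char; rewrite subrr /nsq /dot big1 // => i _; rewrite mxE mul0r; lra.
by exists [set c]; rewrite bigcap_set1.
Qed.

Lemma Sn_pt (m : vec) : Defs.Sn [set m].
Proof.
split; first split; [exact: compact_set1 | split; [|by exists m] |].
  by move=> a b t -> -> _ _ /=; rewrite -scalerDl subrK scale1r.
exists [set c | nsq (c - m) = 1]; apply/seteqP; split.
  by move=> z -> c /= hc; apply/tb_char; rewrite nsq_sym hc.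
move=> z /= hz; case: (eqVneq z m) => // hne; exfalso.
set r := Num.sqrt (nsq (z - m)).
have r0 : 0 <= r by apply: sqrtr_ge0.
have rn0 : r != 0.
  rewrite sqrtr_eq0 -ltNge; apply/negPn/negP; rewrite -leNgt => h.
  by move/negP: hne; apply; apply/eqP; apply/subr0_eq/nsq_eq0.
have rp : 0 < r by rewrite lt_neqAle eq_sym rn0.
have r2 : nsq (z - m) = r ^+ 2 by rewrite nsq_sqrt.
have := hz (m - r^-1 *: (z - m)). rewrite /=.
have -> : m - r^-1 *: (z - m) - m = (- r^-1) *: (z - m).
  by apply/rowP => i; rewrite !mxE; ring.
rewrite nsqZ r2 sqrrN exprVn mulVf ?expf_neq0 // => /(_ erefl) /tb_char.
have -> : z - (m - r^-1 *: (z - m)) = (1 + r^-1) *: (z - m).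
  by apply/rowP => i; rewrite !mxE; ring.
rewrite nsqZ r2 -exprMn mulrDl mul1r mulVf //.
have : 1 < (r + 1) ^+ 2 by nra.
lra.
Qed.

Lemma nsq_sub_le a b : nsq (a - b) <= 2 * nsq a + 2 * nsq b.
Proof. have := para a b; have := nsq_ge0 (a + b); lra. Qed.
Lemma nsq_add_le a b : nsq (a + b) <= 2 * nsq a + 2 * nsq b.
Proof. have := para a b; have := nsq_ge0 (a - b); lra. Qed.

Lemma compact_nsq_bound (K : set vec) : compact K -> exists Q, forall z, K z -> nsq z <= Q.
Proof.
move=> /compact_bounded /ex_strict_bound_gt0 [M M0 hM].
exists (\sum_(i < n) M ^+ 2) => z Kz.
have hz : `|z| < M := hM z Kz.
apply: ler_sum => i _; rewrite -expr2.
have h := le_lt_trans (coord_le_norm z i) hz.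
rewrite -real_normK ?num_real //.
have hn := normr_ge0 (z ord0 i).
rewrite ler_pXn2r ?nnegrE //; lra.
Qed.

Lemma hS_ne (A K : set vec) x : A `<=` Defs.mtrans x B -> A x -> compact K -> K !=set0 ->
  hS A K !=set0.
Proof.
move=> AB Ax /compact_nsq_bound [Q hQ] [k0 Kk0].
have Q0 : 0 <= Q by apply: le_trans (hQ _ Kk0); apply: nsq_ge0.
have nx := nsq_ge0 x.
set l := 1 + 4 * nsq x + 4 + 2 * Q.
have l1 : 1 <= l by rewrite /l; lra.
have l0 : 0 < l by lra.
have ll : l <= l ^+ 2 by rewrite expr2; nra.
exists l; split => //; split.
  move=> a Aa; exists k0 => //; exists (a - k0); last by rewrite addrC subrK.
  apply/sb_char => //.
  have /tb_char ha := AB a Aa.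
  have h1 := nsq_sub_le a k0; have h2 := nsq_add_le x (a - x).
  rewrite addrC subrK in h2.
  have := hQ _ Kk0; rewrite /l in ll *; lra.
move=> z Kz; exists x => //; exists (z - x); last by rewrite addrC subrK.
apply/sb_char => //.
have h1 := nsq_sub_le z x; have := hQ _ Kz; rewrite /l in ll *; lra.
Qed.

Lemma nsq0 : nsq 0 = 0.
Proof. by rewrite /nsq /dot big1 // => i _; rewrite mxE mul0r. Qed.

Lemma mid_eq (x y c : vec) : Num.sqrt (nsq (x - c)) <= Num.sqrt (nsq (x - y)) / 2 ->
  Num.sqrt (nsq (y - c)) <= Num.sqrt (nsq (x - y)) / 2 -> c = 2^-1 *: (x + y).
Proof.
set d := Num.sqrt (nsq (x - y)).
have d0 : 0 <= d by apply: sqrtr_ge0.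
have d2 : nsq (x - y) = d ^+ 2 by rewrite nsq_sqrt.
have hd2 : 0 <= d / 2 by lra.
rewrite !(sqrt_le _ _ (nsq_ge0 _) hd2) => h1 h2.
have := para (x - c) (y - c).
have -> : x - c - (y - c) = x - y by apply/rowP => i; rewrite !mxE; ring.
rewrite d2 => hp.
have h0 : nsq (x - c + (y - c)) <= 0 by nra.
have := nsq_eq0 _ h0 => /rowP H; apply/rowP => i; have := H i; rewrite !mxE => hi.
lra.
Qed.

Lemma half (x y : vec) : Num.sqrt (nsq (x - 2^-1 *: (x + y))) = Num.sqrt (nsq (x - y)) / 2.
Proof.
have -> : x - 2^-1 *: (x + y) = 2^-1 *: (x - y) by apply/rowP => i; rewrite !mxE; field.
rewrite nsqZ sqrtrM ?sqr_ge0 // sqrtr_sqr ger0_norm ?invr_ge0 ?ler0n //; lra.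
Qed.

Lemma half' (x y : vec) : Num.sqrt (nsq (y - 2^-1 *: (x + y))) = Num.sqrt (nsq (x - y)) / 2.
Proof. by rewrite (addrC x y) half nsq_sym. Qed.

Lemma mid_pts (x y : vec) : Defs.mscale (2^-1) (Defs.msum [set x] [set y]) = [set 2^-1 *: (x + y)].
Proof.
apply/seteqP; split.
  by move=> z [w [a -> [b -> <-]] <-].
by move=> z -> ; exists (x + y) => //; exists x => //; exists y.
Qed.

Lemma mid_balls (x y : vec) : Defs.mscale (2^-1) (Defs.msum (Defs.mtrans x B) (Defs.mtrans y B))
  = Defs.mtrans (2^-1 *: (x + y)) B.
Proof.
apply/seteqP; split.
  move=> z [w [a /tb_char ha [b /tb_char hb <-]] <-]; apply/tb_char.
  have -> : 2^-1 *: (a + b) - 2^-1 *: (x + y) = 2^-1 *: ((a - x) + (b - y)).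
    by apply/rowP => i; rewrite !mxE; field.
  rewrite nsqZ; have := nsq_add_le (a - x) (b - y).
  have -> : (2^-1 : R) ^+ 2 = 4^-1 by field.
  lra.
move=> z /tb_char hz.
exists ((x + (z - 2^-1 *: (x + y))) + (y + (z - 2^-1 *: (x + y)))).
  exists (x + (z - 2^-1 *: (x + y))); first by apply/tb_char; rewrite addrC addKr.
  by exists (y + (z - 2^-1 *: (x + y))) => //; apply/tb_char; rewrite addrC addKr.
by apply/rowP => i; rewrite !mxE; field.
Qed.

Lemma pt_sub (x : vec) : [set x] `<=` Defs.mtrans x B.
Proof. by move=> a ->; apply/tb_char; rewrite subrr nsq0; lra. Qed.

Lemma part1 (x y : vec) : Sn_cute [set x] [set y].
Proof.
set m := 2^-1 *: (x + y).
split; first exact: Sn_pt. split; first exact: Sn_pt.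
cbv zeta; rewrite mid_pts -/m !haus_pts.
set d := Num.sqrt (nsq (x - y)).
have d0 : 0 <= d by apply: sqrtr_ge0.
split; [exact: Sn_pt | exact: half | exact: half' |].
move=> M' [[cpt [_ [z0 Mz0]]] _] hx hy.
have sub : forall z, M' z -> z = m.
  move=> z Mz; apply: mid_eq.
  - apply: le_of_forall => l hl.
    have l0 : 0 < l by apply: le_lt_trans hl; apply: divr_ge0 => //; apply: sqrtr_ge0.
    have [_ h] := @haus_ext _ M' _ l (@hS_ne [set x] M' x (pt_sub x) erefl cpt (ex_intro _ z0 Mz0)) hx hl.
    have [a -> [w /(sb_char _ _ l0) hw E]] := h z Mz.
    rewrite -E nsq_sym addrC addKr sqrt_le ?nsq_ge0 //; lra.
  - apply: le_of_forall => l hl.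
    have l0 : 0 < l by apply: le_lt_trans hl; apply: divr_ge0 => //; apply: sqrtr_ge0.
    have [_ h] := @haus_ext _ M' _ l (@hS_ne [set y] M' y (pt_sub y) erefl cpt (ex_intro _ z0 Mz0)) hy hl.
    have [a -> [w /(sb_char _ _ l0) hw E]] := h z Mz.
    rewrite -E nsq_sym addrC addKr sqrt_le ?nsq_ge0 //; lra.
apply/seteqP; split => z; first exact: sub.
by move=> ->; rewrite -(sub z0 Mz0).
Qed.

Lemma ball_self (x : vec) : Defs.mtrans x B x.
Proof. by apply/tb_char; rewrite subrr nsq0; lra. Qed.

Lemma part2 (x y : vec) : Sn_cute (Defs.mtrans x B) (Defs.mtrans y B).
Proof.
set m := 2^-1 *: (x + y).
split; first exact: Sn_ball. split; first exact: Sn_ball.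
cbv zeta; rewrite mid_balls -/m !haus_balls.
set d := Num.sqrt (nsq (x - y)).
have d0 : 0 <= d by apply: sqrtr_ge0.
split; [exact: Sn_ball | exact: half | exact: half' |].
move=> M' [[cpt [_ [z0 Mz0]]] [C hC]] hx hy.
have Msub : forall c, C c -> M' `<=` Defs.mtrans c B.
  by move=> c Cc z; rewrite hC => /(_ c Cc).
have Cm : forall c, C c -> c = m.
  move=> c Cc; apply: mid_eq.
  - apply: le_of_forall => l hl.
    have l0 : 0 < l by apply: le_lt_trans hl; apply: divr_ge0 => //; apply: sqrtr_ge0.
    have [h _] := @haus_ext _ M' _ l (@hS_ne _ M' x (fun a h => h) (ball_self x) cpt (ex_intro _ z0 Mz0)) hx hl.
    apply: lower => // z /h; exact: (@msum_monol M' (Defs.mtrans c B) _ (Msub c Cc)).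
  - apply: le_of_forall => l hl.
    have l0 : 0 < l by apply: le_lt_trans hl; apply: divr_ge0 => //; apply: sqrtr_ge0.
    have [h _] := @haus_ext _ M' _ l (@hS_ne _ M' y (fun a h => h) (ball_self y) cpt (ex_intro _ z0 Mz0)) hy hl.
    apply: lower => // z /h; exact: (@msum_monol M' (Defs.mtrans c B) _ (Msub c Cc)).
apply/seteqP; split => z; last first.
  by move=> hz; rewrite hC => c Cc; rewrite (Cm c Cc).
move=> Mz.
have [[c Cc]|C0] := pselect (C !=set0).
  by rewrite -(Cm c Cc); exact: Msub.
have C0' : C = set0 by apply/seteqP; split => // c Cc; apply: C0; exists c.
apply/tb_char.
have [n0|np] := posnP n.
  by rewrite /nsq /dot big1 // => i _; have := ltn_ord i; rewrite {2}n0.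
exfalso.
move: cpt; rewrite hC C0' bigcap_set0 => /compact_nsq_bound [Q hQ].
pose v : vec := const_mx (Q + 1).
have hv := hQ v I.
have ht := term_le v (Ordinal np).
rewrite mxE in ht.
have := nsq_ge0 v.
nra.
Qed.
End Alg.

Theorem lemma5 (R : realType) (n : nat) (x y : 'rV[R]_n) :
  Sn_cute [set x] [set y] /\
  Sn_cute (mtrans x (@unit_ball R n)) (mtrans y (@unit_ball R n)).
Proof. split; [exact: part1 | exact: part2]. Qed.
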